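(* Let $d\ge2$ and suppose $\mathbf X\sim H$ is a $d$-dimensional random vector whose marginals are identical, continuous and strictly increasing, with correlation matrix $R$ and copula $C$. Then $H\sim\mathrm{IC}_R$ if and only if $C\sim\mathrm{IC}_R$.
   Context: $\mathcal L^2$ is the set of non-degenerate real random variables with finite variance. $(X,Y)\in\mathrm{IC}_r$ means $X,Y\in\mathcal L^2$ and $\mathrm{Corr}(X,Y)=\mathrm{Corr}(g(X),g(Y))=r$ for all measurable $g$ with $g(X),g(Y)\in\mathcal L^2$. For a correlation matrix $R=(r_{ij})_{d\times d}$, $\mathbf X\in\mathrm{IC}_R$ means $(X_i,X_j)\in\mathrm{IC}_{r_{ij}}$ for all $i,j\in[d]$. For a distribution function $G$ on $\mathbb R^d$ (in particular a copula), $G\sim\mathrm{IC}_R$ means that $\mathbf Y\in\mathrm{IC}_R$ for some random vector $\mathbf Y$ with distribution function $G$. *)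

(* Defs.v *)
From HB Require Import structures.
From mathcomp Require Import all_boot all_order all_algebra.
From mathcomp Require Import all_classical all_reals all_analysis.
Unset Printing Implicit Defensive.
Import Order.TTheory GRing.Theory Num.Theory numFieldTopology.Exports.
Local Open Scope classical_set_scope.
Local Open Scope ring_scope.

Section defs.
Context {R : realType}.

Definition L2 {d} {T : measurableType d} (P : probability T R) (X : T -> R) : Prop :=
  X \in Lfun P 2%:E /\ ~ (exists c : R, P [set w | X w = c] = 1%E).

Definition corr {d} {T : measurableType d} (P : probability T R) (X Y : T -> R) : R :=
  fine (covariance P X Y) / Num.sqrt (fine 'V_P[X] * fine 'V_P[Y]).

Definition IC_pair {d} {T : measurableType d} (P : probability T R)
    (X Y : T -> R) (r : R) : Prop :=
  [/\ L2 P X, L2 P Y, corr P X Y = r &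
    forall g : R -> R, measurable_fun setT g ->
      L2 P (g \o X) -> L2 P (g \o Y) -> corr P (g \o X) (g \o Y) = r].

Definition IC_vec {d} {T : measurableType d} (P : probability T R) {n : nat}
    (Rm : 'M[R]_n) (X : 'I_n -> {RV P >-> R}) : Prop :=
  forall i j : 'I_n, IC_pair P (X i) (X j) (Rm i j).

Definition is_df {d} {T : measurableType d} (P : probability T R) {n : nat}
    (X : 'I_n -> {RV P >-> R}) (G : ('I_n -> R) -> R) : Prop :=
  forall x : 'I_n -> R, P [set w | forall i, X i w <= x i] = (G x)%:E.

Definition dist_IC {n : nat} (Rm : 'M[R]_n) (G : ('I_n -> R) -> R) : Prop :=
  exists (d : measure_display) (T : measurableType d) (P : probability T R)
         (Y : 'I_n -> {RV P >-> R}), is_df P Y G /\ IC_vec P Rm Y.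

(* C is an n-dimensional copula: the distribution function (on R^n) of a
   random vector with standard uniform marginals. *)
Definition is_copula {n : nat} (C : ('I_n -> R) -> R) : Prop :=
  exists (d : measure_display) (T : measurableType d) (P : probability T R)
         (U : 'I_n -> {RV P >-> R}), is_df P U C /\
    forall (i : 'I_n) (t : R), 0 <= t <= 1 -> P [set w | U i w <= t] = t%:E.

End defs.

(* Main.v *)
Require Import Defs.
From HB Require Import structures.
From mathcomp Require Import all_boot all_order all_algebra.
From mathcomp Require Import all_classical all_reals all_analysis.
From mathcomp Require Import lra measurable_realfun.
Import Order.TTheory GRing.Theory Num.Theory numFieldTopology.Exports.
Local Open Scope classical_set_scope.
Local Open Scope ring_scope.
Section aux.
Context {R : realType}.

Definition ebox n (J : pred 'I_n) (x : 'I_n -> R) (m : nat) (k : 'I_n) : R :=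
  if J k then x k else m%:R.


Lemma exists_nat_bound n (f : 'I_n -> R) : exists m : nat, forall k, f k <= m%:R.
Proof.
exists (Num.trunc (\sum_k `|f k|)).+1 => k.
apply: (le_trans (ler_norm (f k))).
apply: ltW; apply: le_lt_trans (truncnS_gt _).
by rewrite (bigD1 k) //= lerDl sumr_ge0.
Qed.

Lemma meas_box d (T : measurableType d) (Q : probability T R) n
  (V : 'I_n -> {RV Q >-> R}) (J : pred 'I_n) (x : 'I_n -> R) :
  measurable [set w | forall k, J k -> V k w <= x k].
Proof.
have -> : [set w | forall k, J k -> V k w <= x k] =
  \bigcap_(k in [set k | J k]) (V k @^-1` `]-oo, x k]).
  apply/seteqP; split => w /=.
    by move=> h k /= Jk; rewrite in_itv /= h.
  by move=> h k Jk; have := h k Jk; rewrite /= in_itv.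
apply: fin_bigcap_measurable.
  exact: finite_finset.
move=> k _; rewrite -[X in measurable X]setTI.
by apply: (measurable_funP (V k)) => //.
Qed.
End aux.
Arguments ebox {R n}.
Arguments meas_box {R d T Q n}.

Section aux2.
Context {R : realType}.

Lemma lim_box d (T : measurableType d) (Q : probability T R) n
  (V : 'I_n -> {RV Q >-> R}) (J : pred 'I_n) (x : 'I_n -> R) :
  (fun m => Q [set w | forall k, V k w <= ebox J x m k]) @ \oo -->
  Q [set w | forall k, J k -> V k w <= x k].
Proof.
pose A m := [set w | forall k, V k w <= ebox J x m k].
have -> : [set w | forall k, J k -> V k w <= x k] = \bigcup_m A m.
  apply/seteqP; split => w /=.
    move=> h; have [m hm] := exists_nat_bound _ (fun k => V k w).
    exists m => // k; rewrite /ebox; case: ifP => Jk; [exact: h | exact: hm].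
  by move=> [m _ h] k Jk; have := h k; rewrite /ebox Jk.
apply: (nondecreasing_cvg_mu (mu:=Q) (F:=A)).
- move=> m; have := meas_box V xpredT (ebox J x m).
  by congr measurable; apply/seteqP; split => w /= h k //; exact: h.
- have -> : \bigcup_m A m = [set w | forall k, J k -> V k w <= x k].
    apply/seteqP; split => w /=.
      by move=> [m _ h] k Jk; have := h k; rewrite /ebox Jk.
    move=> h; have [m hm] := exists_nat_bound _ (fun k => V k w).
    exists m => // k; rewrite /ebox; case: ifP => Jk; [exact: h | exact: hm].
  exact: meas_box.
- move=> m1 m2 m12; apply/subsetPset => w /= h k.
  apply: (le_trans (h k)); rewrite /ebox; case: ifP => // _.
  by rewrite ler_nat.
Qed.

Lemma df_marg d1 (T1 : measurableType d1) (Q1 : probability T1 R)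
  d2 (T2 : measurableType d2) (Q2 : probability T2 R) n
  (V1 : 'I_n -> {RV Q1 >-> R}) (V2 : 'I_n -> {RV Q2 >-> R}) G :
  is_df Q1 V1 G -> is_df Q2 V2 G -> forall (J : pred 'I_n) x,
  Q1 [set w | forall k, J k -> V1 k w <= x k] =
  Q2 [set w | forall k, J k -> V2 k w <= x k].
Proof.
move=> h1 h2 J x.
have c1 := lim_box _ _ _ _ V1 J x.
have c2 := lim_box _ _ _ _ V2 J x.
have e : (fun m => Q1 [set w | forall k, V1 k w <= ebox J x m k]) =
         (fun m => Q2 [set w | forall k, V2 k w <= ebox J x m k]).
  by apply/funext => m; rewrite h1 h2.
rewrite e in c1.
exact: (cvg_unique _ c1 c2).
Qed.
End aux2.
Arguments lim_box {R d T Q n}.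
Arguments df_marg {R d1 T1 Q1 d2 T2 Q2 n V1 V2 G}.

Section aux3.
Context {R : realType}.

Lemma null_eq d (T : measurableType d) (Q : {measure set T -> \bar R}) (A B N : set T) :
  measurable A -> measurable B -> measurable N -> Q N = 0%E ->
  (forall w, ~ N w -> (A w <-> B w)) -> Q A = Q B.
Proof.
move=> mA mB mN N0 h.
have key : forall A B : set T, measurable A -> measurable B ->
    (forall w, ~ N w -> A w -> B w) -> (Q A <= Q B)%E.
  move=> A' B' mA' mB' h'.
  rewrite -(measureU0 (mu:=Q) mB' mN N0).
  apply: le_measure; rewrite ?inE //; first exact: measurableU.
  move=> w Aw; have [Nw|Nw] := pselect (N w); first by right.
  by left; exact: h'.
apply/le_anti/andP; split; apply: key => // w /h; by case.
Qed.

Lemma preimage_ray d (T : measurableType d) (V : T -> R) (b : R) :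
  V @^-1` `]-oo, b] = [set w | V w <= b].
Proof. by apply/seteqP; split => w /=; rewrite in_itv /=. Qed.

Lemma law_eq d1 (T1 : measurableType d1) (Q1 : probability T1 R)
  d2 (T2 : measurableType d2) (Q2 : probability T2 R)
  (V1 : {RV Q1 >-> R}) (V2 : {RV Q2 >-> R}) :
  (forall x, Q1 [set w | V1 w <= x] = Q2 [set w | V2 w <= x]) ->
  forall A : set R, measurable A ->
  distribution Q1 V1 A = distribution Q2 V2 A.
Proof.
move=> h A mA.
apply: (measure_unique (@ocitv R) (fun k => `]-(k%:R), k%:R]%classic)) => //.
- exact: ocitvI.
- by move=> k; exact: is_ocitv.
- apply/seteqP; split => // r _.
  have [m hm] := exists_nat_bound 1 (fun _ => `|r|).
  have hr := hm ord0; have h1 := ler_norm r; have h2 := ler_norm (- r).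
  rewrite normrN in h2.
  exists m.+1 => //=; rewrite in_itv /=; apply/andP; split.
    by rewrite ltrNl; apply: (le_lt_trans h2); apply: (le_lt_trans hr); rewrite ltr_nat.
  by apply: (le_trans h1); apply: (le_trans hr); rewrite ler_nat.
- move=> I /ocitvP [->|[[a b] /= ab ->]]; first by rewrite !measure0.
  have e : `]a, b]%classic = `]-oo, b] `\` `]-oo, a].
    by rewrite -[RHS]setCK setCD setCitvl setUC -[LHS]setCK setCitv.
  rewrite e !measureD //= ?setIidr.
  all: try (by rewrite /distribution /pushforward !preimage_ray !h).
  + by move=> r /=; apply: subitvPr; rewrite bnd_simp ltW.
  + by apply: (le_lt_trans (probability_le1 _ _)) => //; exact: ltry.
  + by apply: (le_lt_trans (probability_le1 _ _)) => //; exact: ltry.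
- by move=> k; apply: (le_lt_trans (probability_le1 _ _)) => //; exact: ltry.
Qed.
End aux3.
Arguments law_eq {R d1 T1 Q1 d2 T2 Q2 V1 V2}.
Arguments null_eq {R d T Q A B N}.

Section aux4.
Context {R : realType}.

Lemma L2_law d1 (T1 : measurableType d1) (Q1 : probability T1 R)
  d2 (T2 : measurableType d2) (Q2 : probability T2 R)
  (V1 : {RV Q1 >-> R}) (V2 : {RV Q2 >-> R}) :
  (forall x, Q1 [set w | V1 w <= x] = Q2 [set w | V2 w <= x]) ->
  L2 Q1 V1 -> L2 Q2 V2.
Proof.
move=> h [hL hnd]; have law := law_eq h.
split; last first.
  move=> [c hc]; apply: hnd; exists c.
  have := law [set c] (measurable_set1 c).
  by rewrite /distribution /pushforward => ->.
have mf : measurable_fun [set: R] (fun y : R => (`|y| `^ 2)%:E).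
  have h1 := measurableT_comp (measurable_powR 2) (@normr_measurable R setT).
  exact: (measurableT_comp (@EFin_measurable R setT) h1).
move: hL; rewrite !inE /= => /andP[_ h1]; apply/andP; split.
  by rewrite inE /=; exact: measurable_funPT.
move: h1; rewrite !inE /finite_norm unlock /=.
have -> : (\int[Q2]_x (`|V2 x| `^ 2)%:E)%E = (\int[Q1]_x (`|V1 x| `^ 2)%:E)%E.
  rewrite -(ge0_integral_distribution V2 mf); last by move=> y; rewrite lee_fin powR_ge0.
  rewrite -(ge0_integral_distribution V1 mf); last by move=> y; rewrite lee_fin powR_ge0.
  apply: eq_measure_integral => A mA _; exact: (esym (law A mA)).
done.
Qed.
End aux4.
Arguments L2_law {R d1 T1 Q1 d2 T2 Q2 V1 V2}.

Definition mkRV {R : realType} {d} {T : measurableType d} (P : probability T R)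
  (f : T -> R) (mf : measurable_fun setT f) : {RV P >-> R} :=
  mfun_Sub (mem_set mf).

Section aux6.
Context {R : realType}.

Lemma marg1 d1 (T1 : measurableType d1) (Q1 : probability T1 R)
  d2 (T2 : measurableType d2) (Q2 : probability T2 R) n
  (V1 : 'I_n -> {RV Q1 >-> R}) (V2 : 'I_n -> {RV Q2 >-> R}) G :
  is_df Q1 V1 G -> is_df Q2 V2 G -> forall i t,
  Q1 [set w | V1 i w <= t] = Q2 [set w | V2 i w <= t].
Proof.
move=> h1 h2 i t.
have := df_marg h1 h2 (pred1 i) (fun _ => t).
have e : forall d (T : measurableType d) (Q : probability T R) (V : 'I_n -> {RV Q >-> R}),
  [set w | forall k, pred1 i k -> V k w <= t] = [set w | V i w <= t].
  move=> d T Q V; apply/seteqP; split => w /=.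
    by move=> h; apply: h.
  by move=> h k /eqP ->.
by rewrite !e.
Qed.


Lemma Lfun2_bounded d (T : measurableType d) (Q : probability T R) (f : T -> R) :
  measurable_fun setT f -> (forall w, `|f w| <= 1) ->
  f \in Lfun Q 2%:E.
Proof.
move=> mf hb.
rewrite !inE /=; apply/andP; split; first by rewrite inE.
rewrite inE /finite_norm unlock /=.
apply: poweR_lty.
apply: (le_lt_trans (y := (\int[Q]_x (cst 1%E) x)%E)).
  apply: ge0_le_integral => //.
  - have h1 := measurableT_comp (measurable_powR 2) (measurableT_comp (@normr_measurable R setT) mf).
    exact: (measurableT_comp (@EFin_measurable R setT) h1).
  - move=> x _; rewrite lee_fin powR_mulrn //.
    by apply: exprn_ile1.
rewrite integral_cst // mul1e.
by apply: (le_lt_trans (probability_le1 _ _)) => //; exact: ltry.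
Qed.

Lemma bad_null d (T : measurableType d) (Q : probability T R) n (B : 'I_n -> set T) :
  (forall i, measurable (B i)) -> (forall i, Q (B i) = 0%E) ->
  measurable (\big[setU/set0]_(i < n) B i) /\ Q (\big[setU/set0]_(i < n) B i) = 0%E.
Proof.
move=> mB B0.
apply: (big_ind (fun A => measurable A /\ Q A = 0%E)).
- by split; [exact: measurable0 | exact: measure0].
- move=> A1 A2 [m1 e1] [m2 e2]; split; first exact: measurableU.
  exact: null_set_setU.
- by move=> i _; split.
Qed.

Lemma in_bigU T n (B : 'I_n -> set T) w :
  (\big[setU/set0]_(i < n) B i) w <-> exists i, B i w.
Proof.
rewrite -bigcup_seq; split.
  by move=> [i _ h]; exists i.
by move=> [i h]; exists i => //=; rewrite mem_index_enum.
Qed.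
Lemma half_contra (r : R) : 0 < r -> r <= r / 2 -> False.
Proof. move=> h1 h2; lra. Qed.
End aux6.
Arguments marg1 {R d1 T1 Q1 d2 T2 Q2 n V1 V2 G}.
Arguments Lfun2_bounded {R d T Q f}.

Section Fsec.
Context {R : realType}.
Variable F : R -> R.
Hypothesis hFm : forall x y : R, x < y -> F x < F y.
Hypothesis hF01 : forall x, 0 < F x < 1.
Hypothesis hFs : forall t, 0 < t < 1 -> exists x, F x = t.

Lemma leF x y : (F x <= F y) = (x <= y).
Proof. exact: (le_mono hFm). Qed.

Definition Ginv (u : R) : R :=
  if (0 < u) && (u < 1) then xget 0 [set x | F x = u] else 0.

Lemma FG u : 0 < u < 1 -> F (Ginv u) = u.
Proof.
move=> hu; rewrite /Ginv hu /=.
have := xgetPex 0 (hFs u hu); exact.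
Qed.

Lemma GF x : Ginv (F x) = x.
Proof.
have hu := hF01 x.
have e := FG _ hu.
by apply/le_anti/andP; split; rewrite -leF e.
Qed.

Lemma leG u x : 0 < u < 1 -> (Ginv u <= x) = (u <= F x).
Proof. by move=> hu; rewrite -leF FG. Qed.

Lemma Fbox0 (T : Type) n (Z : 'I_n -> T -> R) (u : 'I_n -> R) i :
  u i <= 0 -> [set w | forall k, F (Z k w) <= u k] = set0.
Proof.
move=> hi; apply/seteqP; split => w //= h.
have /andP[h0 _] := hF01 (Z i w).
by have := lt_le_trans h0 (le_trans (h i) hi); rewrite ltxx.
Qed.

Lemma Fbox (T : Type) n (Z : 'I_n -> T -> R) (u : 'I_n -> R) :
  (forall i, 0 < u i) -> [set w | forall k, F (Z k w) <= u k] =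
  [set w | forall k, u k < 1 -> Z k w <= Ginv (u k)].
Proof.
move=> hu; apply/seteqP; split => w /= h k.
  move=> hk; have huk : 0 < u k < 1 by rewrite hu hk.
  by rewrite -leF (FG _ huk); exact: h.
case: (ltP (u k) 1) => hk.
  have huk : 0 < u k < 1 by rewrite hu hk.
  by have := h k hk; rewrite -leF (FG _ huk).
have /andP[_ h1] := hF01 (Z k w); exact: ltW (lt_le_trans h1 hk).
Qed.

Lemma Ginv_meas : measurable_fun setT Ginv.
Proof.
apply: (measurability (@RGenCInfty.G R)); first exact: RGenCInfty.measurableE.
move=> _ [_ [x ->] <-]; rewrite setTI.
have -> : Ginv @^-1` `[x, +oo[ =
   (`]0, 1[ `&` `[F x, +oo[) `|` (if x <= 0 then ~` `]0, 1[ else set0).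
  apply/seteqP; split => u /=.
    rewrite !in_itv /= !andbT.
    case hu: ((0 < u) && (u < 1)).
      move=> h; left; split => //.
      by rewrite -(FG u hu) leF.
    rewrite /Ginv hu => h; right; rewrite h /=.
    by rewrite in_itv /= hu.
  rewrite !in_itv /= !andbT.
  move=> [[hu h]|].
    by rewrite -leF FG.
  case: ifP => // hx hu.
  have hu' : ((0 < u) && (u < 1)) = false.
    by apply/negbTE/negP => h; apply: hu; rewrite /= in_itv /= h.
  by rewrite /Ginv hu'.
apply: measurableU; first by apply: measurableI; exact: measurable_itv.
case: ifP => _ //; apply: measurableC; exact: measurable_itv.
Qed.

Section pull.
Variables (n : nat) (C : ('I_n -> R) -> R).
Variables (d : measure_display) (T : measurableType d) (Q : probability T R).
Variable U : 'I_n -> {RV Q >-> R}.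
Hypothesis hdf : is_df Q U C.
Hypothesis hunif : forall i t, 0 <= t <= 1 -> Q [set w | U i w <= t] = t%:E.

Lemma meas_le (V : {RV Q >-> R}) c : measurable [set w | V w <= c].
Proof.
rewrite -preimage_ray -[X in measurable X]setTI.
by apply: (measurable_funP V).
Qed.

Lemma meas_ge (V : {RV Q >-> R}) c : measurable [set w | c <= V w].
Proof.
have -> : [set w | c <= V w] = V @^-1` `[c, +oo[.
  by apply/seteqP; split => w /=; rewrite in_itv /= andbT.
rewrite -[X in measurable X]setTI.
by apply: (measurable_funP V).
Qed.

Lemma meas_boxT (V : 'I_n -> {RV Q >-> R}) x :
  measurable [set w | forall k, V k w <= x k].
Proof.
have := meas_box V xpredT x.
by congr measurable; apply/seteqP; split => w /= h k //; exact: h.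
Qed.

Definition Bad i := [set w | U i w <= 0] `|` [set w | 1 <= U i w].
Definition Nb := \big[setU/set0]_(i < n) Bad i.

Lemma Bad_meas i : measurable (Bad i).
Proof. by apply: measurableU; [exact: meas_le | exact: meas_ge]. Qed.

Lemma Bad0 i : Q (Bad i) = 0%E.
Proof.
have h0 : Q [set w | U i w <= 0] = 0%E by rewrite hunif // lexx ler01.
have h1 : Q [set w | 1 <= U i w] = 0%E.
  set m := Q [set w | 1 <= U i w].
  have hle : forall t, 0 <= t < 1 -> (m <= (1 - t)%:E)%E.
    move=> t /andP[t0 t1].
    have ht : 0 <= t <= 1 by rewrite t0 ltW.
    have -> : (1 - t)%:E = Q (~` [set w | U i w <= t]).
      by rewrite probability_setC; [rewrite (hunif i t ht) EFinB | exact: meas_le].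
    apply: le_measure; rewrite ?inE; [exact: meas_ge | apply: measurableC; exact: meas_le |].
    move=> w /= h1w h2w.
    by have := le_lt_trans (le_trans h1w h2w) t1; rewrite ltxx.
  have fm : m = (fine m)%:E by rewrite fineK // fin_num_measure //; exact: meas_ge.
  set r := fine m in fm.
  have r0 : 0 <= r by rewrite -lee_fin -fm measure_ge0.
  have r1 : r <= 1 by rewrite -lee_fin -fm; apply: probability_le1; exact: meas_ge.
  have [r0'|rn0] := eqVneq r 0; first by rewrite fm r0'.
  have rp : 0 < r by rewrite lt_neqAle eq_sym rn0 r0.
  have := hle (1 - r / 2).
  rewrite fm lee_fin.
  have -> : 1 - (1 - r / 2) = r / 2 by rewrite opprB addrC subrK.
  move=> /(_ _) h; exfalso.
  have : r <= r / 2.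
    apply: h; apply/andP; split.
      by rewrite subr_ge0 ler_pdivrMr // mul1r (le_trans r1) // ler1n.
    by rewrite ltrBlDr ltrDl divr_gt0.
  exact: half_contra rp.
apply/le_anti/andP; split; last exact: measure_ge0.
apply: (le_trans (measureU2 Q _ _)); [exact: meas_le | exact: meas_ge |].
change (Q [set w | (U i w <= 0)%R] + Q [set w | (1 <= U i w)%R] <= 0)%E.
by rewrite h0 h1 adde0.
Qed.

Lemma Nb_prop : measurable Nb /\ Q Nb = 0%E.
Proof. exact: bad_null Bad_meas Bad0. Qed.

Lemma notNb w : ~ Nb w -> forall i, 0 < U i w < 1.
Proof.
move=> hN i; apply/negPn/negP => h; apply: hN.
apply/in_bigU; exists i; rewrite /Bad /=.
move: h; rewrite negb_and -!leNgt => /orP[h|h]; [by left | by right].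
Qed.

Definition Yp i : {RV Q >-> R} :=
  mkRV Q (Ginv \o U i) (measurableT_comp Ginv_meas (measurable_funPT (U i))).

Lemma YpE i w : Yp i w = Ginv (U i w). Proof. by []. Qed.

Lemma Yp_df x : Q [set w | forall i, Yp i w <= x i] = (C (fun i => F (x i)))%:E.
Proof.
rewrite -hdf; have [mN N0] := Nb_prop.
apply: (null_eq (meas_boxT _ _) (meas_boxT _ _) mN N0) => w hw.
have hu := notNb _ hw.
by split => h i; have := h i; rewrite YpE (leG _ _ (hu i)).
Qed.

Lemma Yp_marg i c : Q [set w | Yp i w <= c] = (F c)%:E.
Proof.
have [mN N0] := Nb_prop.
rewrite -(hunif i); last by have /andP[a b] := hF01 c; rewrite ltW ?ltW.
apply: (null_eq (meas_le _ _) (meas_le _ _) mN N0) => w hw.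
change (Yp i w <= c <-> U i w <= F c).
by rewrite YpE leG //; exact: notNb.
Qed.

Lemma UFY i w : ~ Nb w -> F (Yp i w) = U i w.
Proof. by move=> hw; rewrite YpE FG //; exact: notNb. Qed.

End pull.

End Fsec.

Theorem corollary1 (R : realType) (n : nat) (hn : (2 <= n)%N)
  (dT : measure_display) (T : measurableType dT) (P : probability T R)
  (X : 'I_n -> {RV P >-> R}) (H C : ('I_n -> R) -> R) (F : R -> R)
  (Rm : 'M[R]_n) :
  is_df P X H ->
  (forall (i : 'I_n) (x : R), P [set w | X i w <= x] = (F x)%:E) ->
  continuous F ->
  (forall x y : R, x < y -> F x < F y) ->
  (forall i : 'I_n, L2 P (X i)) ->
  (forall i j : 'I_n, Rm i j = corr P (X i) (X j)) ->
  is_copula C ->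
  (forall x : 'I_n -> R, H x = C (fun i => F (x i))) ->
  (dist_IC Rm H <-> dist_IC Rm C).
Proof.
move=> hH hF hFc hFm hL2 hRm hcop hHC.
have n0 : (0 < n)%N by apply: leq_trans hn.
pose i0 : 'I_n := Ordinal n0.
have hF01 : forall x, 0 < F x < 1.
  move=> x; apply/andP; split.
    have hx : x - 1 < x by rewrite ltrBlDr ltrDl.
    have h := hFm (x - 1) x hx.
    apply: le_lt_trans h; rewrite -lee_fin -(hF i0); exact: measure_ge0.
  apply: (lt_le_trans (hFm x (x + 1) _)); first by rewrite ltrDl.
  rewrite -lee_fin -(hF i0); apply: probability_le1; exact: meas_le.
have hFs : forall t, 0 < t < 1 -> exists x, F x = t.
  have cdfE : cdf (X i0) = EFin \o F.
    by apply/funext => r; rewrite /cdf /distribution /pushforward /= preimage_ray hF.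
  have c1 : F @ +oo --> (1 : R).
    by have := cvg_cdfy1 (X i0); rewrite cdfE => /fine_cvg.
  have c0 : F @ -oo --> (0 : R).
    by have := cvg_cdfNy0 (X i0); rewrite cdfE => /fine_cvg.
  move=> t /andP[t0 t1].
  have [M [_ hM]] := cvgr_gt _ c1 _ t1.
  have [M' [_ hM']] := cvgr_lt _ c0 _ t0.
  have hb : t < F (M + 1) by apply: hM; rewrite ltrDl.
  have ha : F (M' - 1) < t by apply: hM'; rewrite ltrBlDr ltrDl.
  have ab : M' - 1 <= M + 1.
    rewrite leNgt; apply/negP => ba.
    by have := lt_trans (lt_trans (hFm _ _ ba) ha) hb; rewrite ltxx.
  have hv : Num.min (F (M' - 1)) (F (M + 1)) <= t <= Num.max (F (M' - 1)) (F (M + 1)).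
    by rewrite ge_min le_max (ltW ha) (ltW hb) orbT.
  have [c _ hc] := IVT ab (continuous_subspaceT hFc) hv.
  by exists c.
move: hcop => [dC [TC [P0 [U0 [hdf0 hunif0]]]]].
have hmF : measurable_fun setT F := continuous_measurable_fun hFc.
split.
- move=> [d' [T' [Q' [Y' [hdfY hIC]]]]].
  pose V i := mkRV Q' (F \o Y' i) (measurableT_comp hmF (measurable_funPT (Y' i))).
  exists d', T', Q', V; split.
  + move=> u.
    pose Y0 := Yp F hFm hFs n dC TC P0 U0.
    have hdfY0 : is_df P0 Y0 H.
      by move=> x; rewrite (Yp_df F hFm hFs n C dC TC P0 U0 hdf0 hunif0) hHC.
    have [mN N0] := Nb_prop n dC TC P0 U0 hunif0.
    rewrite -hdf0.
    have -> : P0 [set w | forall i, U0 i w <= u i] =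
              P0 [set w | forall i, F (Y0 i w) <= u i].
      apply: (null_eq (meas_boxT _ _ _ _ _ _) _ mN N0) => [|w hw].
        exact: (@meas_boxT R n dC TC P0
          (fun i => mkRV P0 (F \o Y0 i) (measurableT_comp hmF (measurable_funPT (Y0 i)))) u).
      by split => h i; have := h i; rewrite (UFY F hFm hFs n dC TC P0 U0 i w hw).
    have -> : [set w | forall i, V i w <= u i] = [set w | forall i, F (Y' i w) <= u i] by [].
    case: (pselect (exists i, u i <= 0)) => [[i hi]|hu].
      by rewrite !(Fbox0 F hF01 _ _ _ _ i hi) !measure0.
    have hu' : forall i, 0 < u i.
      by move=> i; rewrite ltNge; apply/negP => hi; apply: hu; exists i.
    rewrite !(Fbox F hFm hF01 hFs _ _ _ _ hu').
    exact: (df_marg hdfY hdfY0).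
  + have L2V : forall k, L2 Q' (V k).
      move=> k; split.
        apply: Lfun2_bounded; first exact: measurableT_comp hmF (measurable_funPT (Y' k)).
        by move=> w; have /andP[a b] := hF01 (Y' k w); rewrite ger0_norm ?ltW.
      move=> [c hc].
      have [w0 hw0] : exists w, V k w = c.
        apply: contrapT => hne.
        have e : [set w | V k w = c] = set0.
          by apply/seteqP; split => w //= hw; apply: hne; exists w.
        move: hc; rewrite e measure0 => /(congr1 fine) /= /eqP.
        by rewrite eq_sym oner_eq0.
      pose y0 := Y' k w0.
      have hsub : [set w | V k w = c] `<=` [set w | Y' k w <= y0].
        move=> w /= hw; rewrite -(leF F hFm).
        have e : F (Y' k w) = F y0 := etrans hw (esym hw0).
        by rewrite e.
      have : (1 <= Q' [set w | (Y' k w <= y0)%R])%E.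
        rewrite -hc; apply: le_measure; rewrite ?inE //.
          have := measurable_funP (V k) measurableT [set c] (measurable_set1 c).
          by rewrite setTI.
        exact: meas_le.
      rewrite -(marg1 hH hdfY) hF lee_fin.
      by have /andP[_ b] := hF01 y0; rewrite leNgt b.
    move=> i j; have [L2i L2j hc hg] := hIC i j.
    split => //.
      exact: (hg F hmF (L2V i) (L2V j)).
    move=> g mg h1 h2.
    exact: (hg (g \o F) (measurableT_comp mg hmF) h1 h2).
- move=> [d' [T' [Q' [U [hdfU hIC]]]]].
  have hunifU : forall i t, 0 <= t <= 1 -> Q' [set w | U i w <= t] = t%:E.
    by move=> i t ht; rewrite (marg1 hdfU hdf0) hunif0.
  pose Y := Yp F hFm hFs n d' T' Q' U.
  exists d', T', Q', Y; split.
    by move=> x; rewrite (Yp_df F hFm hFs n C d' T' Q' U hdfU hunifU) hHC.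
  have L2Y : forall k, L2 Q' (Y k).
    move=> k; apply: (L2_law _ (hL2 k)) => x.
    by rewrite hF (Yp_marg F hFm hF01 hFs n d' T' Q' U hunifU).
  move=> i j; have [L2i L2j hc hg] := hIC i j.
  have mG := Ginv_meas F hFm hFs.
  split => //.
    exact: (hg (Ginv F) mG (L2Y i) (L2Y j)).
  move=> g mg h1 h2.
  exact: (hg (g \o Ginv F) (measurableT_comp mg mG) h1 h2).
Qed.
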